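(* Let $a\geq 0$ and $b\in\mathbb{Z}/11\mathbb{Z}$. Then $\operatorname{Hom}(\mathcal{O},\mathcal{O}(a,b))\neq 0$ on $X_w$ unless either $a=0$ and $b\neq 0$, or $(a,b)\in\mathbb{X}:=\{(1,0),(1,2),(1,6),(1,7),(1,8),(1,10),(2,0)\}$.
   Context: Let $w=x_1^2x_2+x_2^2x_3+x_3^2x_4+x_4^2x_5+x_5^2x_1$, $\Gamma_w=\{(t_1,\ldots,t_6)\in\mathbb{G}_m^{6} : w(t_1x_1,\ldots,t_5x_5)=t_6\,w(x)\}$ acting on $\mathbb{A}^5$ via the first $5$ coordinates, and $X_w=[(\operatorname{Spec}(\mathbb{C}[x_1,\ldots,x_5]/(w))\setminus 0)/\Gamma_w]$. One has $\Gamma_w\cong\mathbb{G}_m\times\mathbb{Z}/11\mathbb{Z}$, where $\mathbb{G}_m$ acts by $\lambda\cdot x=(\lambda x_1,\ldots,\lambda x_5)$ and $\mathbb{Z}/11\mathbb{Z}$ is generated by $\rho=(\xi,\xi^9,\xi^4,\xi^3,\xi^5)$ with $\xi$ a primitive $11$th root of unity; so $X_w=[Z_w/\langle\rho\rangle]$ with $Z_w\subset\mathbb{P}^4$ the cubic threefold $w=0$, and $\operatorname{Pic}(X_w)\cong\mathbb{Z}\times\mathbb{Z}/11\mathbb{Z}$. For $(a,b)\in\mathbb{Z}\times\mathbb{Z}/11\mathbb{Z}$, $\mathcal{O}(a,b)$ denotes the corresponding line bundle, normalized so that, grading $\mathbb{C}[x_1,\ldots,x_5]$ by $\mathbb{Z}\times\mathbb{Z}/11\mathbb{Z}$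 with $\deg x_1=(1,1)$, $\deg x_2=(1,9)$, $\deg x_3=(1,4)$, $\deg x_4=(1,3)$, $\deg x_5=(1,5)$, the space $\operatorname{Hom}(\mathcal{O},\mathcal{O}(a,b))$ is the bidegree-$(a,b)$ part of $\mathbb{C}[x_1,\ldots,x_5]/(w)$; and $\mathcal{O}=\mathcal{O}(0,0)$. *)

(* Defs.v *)
From HB Require Import structures.
From mathcomp Require Import all_boot all_order all_algebra all_field.
From mathcomp Require Import mpoly.
Set Implicit Arguments. Unset Strict Implicit. Unset Printing Implicit Defensive.
Import GRing.Theory.
Local Open Scope ring_scope.

(* Coordinates x_1..x_5 are 'X_0..'X_4. Base field: algC (mathcomp's model of C). *)

Definition wt (i : 'I_5) : nat := nth 0%N [:: 1; 9; 4; 3; 5]%N i.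

Definition mono_bideg (a : nat) (b : 'I_11) (m : 'X_{1..5}) : bool :=
  (mdeg m == a) && (((\sum_(i < 5) wt i * m i) %% 11)%N == val b).

(* f is bihomogeneous of bidegree (a,b) (0 counts as such) *)
Definition homog_bideg (a : nat) (b : 'I_11) (f : {mpoly algC[5]}) : bool :=
  all (mono_bideg a b) (msupp f).

Definition x (i : 'I_5) : {mpoly algC[5]} := 'X_i.

Definition w_poly : {mpoly algC[5]} :=
  x (inord 0) ^+ 2 * x (inord 1) + x (inord 1) ^+ 2 * x (inord 2)
  + x (inord 2) ^+ 2 * x (inord 3) + x (inord 3) ^+ 2 * x (inord 4)
  + x (inord 4) ^+ 2 * x (inord 0).

(* Hom(O, O(a,b)) = bidegree-(a,b) part of C[x1..x5]/(w); since w is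
   bihomogeneous, this part is the image of the bidegree-(a,b) polynomials,
   so it is nonzero iff some such polynomial is not in the ideal (w). *)
Definition Hom_O_nonzero (a : nat) (b : 'I_11) : Prop :=
  exists f : {mpoly algC[5]},
    homog_bideg a b f /\ ~ (exists g : {mpoly algC[5]}, f = w_poly * g).

Definition in_X (a : nat) (b : 'I_11) : bool :=
  ((a == 1)%N && (val b \in [:: 0; 2; 6; 7; 8; 10]%N)) || ((a == 2)%N && (val b == 0)%N).

(* Main.v *)
Require Import Defs.
From mathcomp Require Import all_boot all_order all_algebra all_field.
From mathcomp Require Import mpoly.
From mathcomp Require Import zify ring.
Set Implicit Arguments. Unset Strict Implicit. Unset Printing Implicit Defensive.
Import GRing.Theory.
Local Open Scope ring_scope.

Definition mk (s : seq nat) : 'X_{1..5} := [multinom nth 0%N s i | i < 5].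
Definition tot (s : seq nat) := (nth 0 s 0 + nth 0 s 1 + nth 0 s 2 + nth 0 s 3 + nth 0 s 4)%N.
Definition wsum (s : seq nat) := (1*nth 0 s 0 + 9*nth 0 s 1 + 4*nth 0 s 2 + 3*nth 0 s 3 + 5*nth 0 s 4)%N.
Lemma mk_bideg a (b : 'I_11) s : tot s = a -> (wsum s %% 11 = val b)%N -> mono_bideg a b (mk s).
Proof.
rewrite /mono_bideg /tot /wsum => <- <-.
case: s => [|x0 [|x1 [|x2 [|x3 [|x4 s]]]]]; apply/andP; split; apply/eqP; rewrite ?mdegE !big_ord_recl big_ord0 !mnmE /wt /= ; lia.
Qed.
Definition pt (i : 'I_5) : algC := (nth 0%Z [:: -4; -4; 2; 4; 2]%Z i)%:~R.

Lemma pt_neq0 i : pt i != 0.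
Proof. case: i => [[|[|[|[|[|k]]]]]] Hi //; by rewrite /pt /= intr_eq0. Qed.

Lemma w_pt : w_poly.@[pt] = 0.
Proof.
rewrite /w_poly /x !expr2 !mevalD !mevalM /= !mevalXU /pt !inordK //=.
rewrite -!rmorphM -!rmorphD /=. by apply/eqP; rewrite intr_eq0. 
Qed.

Lemma monoX_ndiv m : ~ (exists g : {mpoly algC[5]}, 'X_[m] = w_poly * g).
Proof.
case=> g /(congr1 (meval pt)); rewrite mevalM w_pt mul0r mevalX => /eqP.
apply/negP; apply: (big_ind (fun y : algC => y != 0)); first exact: oner_neq0.
  by move=> y z; apply: mulf_neq0.
by move=> i _; rewrite expf_neq0 // pt_neq0.
Qed.
Definition T3 (r : nat) : seq nat :=
  nth [::] [:: [:: 2;1;0;0;0]; [:: 0;2;0;0;1]; [:: 1;1;0;1;0]; [:: 3;0;0;0;0];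
    [:: 1;1;0;0;1]; [:: 2;0;0;1;0]; [:: 2;0;1;0;0]; [:: 2;0;0;0;1];
    [:: 1;2;0;0;0]; [:: 1;0;2;0;0]; [:: 1;0;1;0;1]]%N r.

Lemma T3P r : (r < 11)%N -> tot (T3 r) = 3%N /\ (wsum (T3 r) %% 11 = r)%N.
Proof. by do 11! (case: r => [|r] //). Qed.

Lemma exists_s (a : nat) (b : 'I_11) :
  ~ ((a = 0%N) /\ (val b <> 0%N)) -> ~~ in_X a b ->
  exists s, tot s = a /\ (wsum s %% 11 = val b)%N.
Proof.
case: b => b Hb /=; rewrite /in_X /=.
move=> H1; rewrite !inE => H2; move: H1 H2.
case: a => [|[|[|n]]] H1 H2.
- exists [:: 0;0;0;0;0]%N; rewrite /tot /wsum /=; lia.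
- clear H1; move: Hb H2; do 11! (case: b => [|b]; [move=> _ /= H2; try (by []);
   try by [ exists [:: 1;0;0;0;0]%N | exists [:: 0;1;0;0;0]%N | exists [:: 0;0;1;0;0]%N
          | exists [:: 0;0;0;1;0]%N | exists [:: 0;0;0;0;1]%N ] | ]); by [].
- clear H1; move: Hb H2; do 11! (case: b => [|b]; [move=> _ /= H2; try (by []);
   try by [ exists [:: 0;1;0;1;0]%N | exists [:: 2;0;0;0;0]%N | exists [:: 0;1;0;0;1]%N
          | exists [:: 1;0;0;1;0]%N | exists [:: 1;0;1;0;0]%N | exists [:: 1;0;0;0;1]%N
          | exists [:: 0;2;0;0;0]%N | exists [:: 0;0;2;0;0]%N | exists [:: 0;0;1;0;1]%N
          | exists [:: 1;1;0;0;0]%N ] | ]); by [].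
- set r := ((b + 10 * n) %% 11)%N.
  have /T3P [Ht Hw] : (r < 11)%N by rewrite /r ltn_mod.
  set t := T3 r in Ht Hw.
  exists [:: n + nth 0 t 0; nth 0 t 1; nth 0 t 2; nth 0 t 3; nth 0 t 4]%N.
  move: Ht Hw; rewrite /tot /wsum /= /r; lia.
Qed.

Theorem lemma4p1 (a : nat) (b : 'I_11) :
  ~ ((a = 0%N) /\ (val b <> 0%N)) -> ~~ in_X a b -> Hom_O_nonzero a b.
Proof.
move=> H1 H2; have [s [Ht Hw]] := exists_s H1 H2.
exists 'X_[mk s]; split; last exact: monoX_ndiv.
by rewrite /homog_bideg msuppX /= andbT; apply: mk_bideg.
Qed.
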